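(* Let $(C,D)$ and $(C,D')$ be two multifactorizations of $w$ on the same underlying $R$-module $C$, supported in finitely many filtration gradings, with $D=\sum_i d_i$, $D'=\sum_i d_i'$, and suppose $d_i=d_i'$ for all $i<n$ (some $n\ge1$). Then $d_n-d_n'$ is a chain map of matrix factorizations $(C,d_0)\to(C,d_0)\{-k\}$. If moreover this chain map is $0$-homotopic to the zero map, then there is a differential $D''=\sum_i d_i''$ on $C$ such that $(C,D'')$ is a multifactorization of $w$ isomorphic to $(C,D')$ and $d_i''=d_i$ for all $i<n+1$.
   Context: All rings and modules are bigraded by an internal grading and a filtration grading. For a module $M$, $M\{i,j\}$ denotes $M$ with gradings shifted so that an element of bidegree $(a,b)$ in $M$ has bidegree $(a+i,b+j)$ in $M\{i,j\}$, $M\{i\}=M\{i,0\}$; a shift by an odd internal amount negates the differential (Koszul sign rule using the internal grading). Fix a ring $R$ and homogeneous $w\in R$ of bidegree $(2k,0)$, $k$ odd. A matrix factorization of $w$ is an $R$-module with $R$-linear $d$ of bidegree $(k,0)$, $d^2=w$. A multifactorization of $w$ is an $R$-module $C$ with $R$-linear maps $d_i:C\to C$ ($i\ge0$) homogeneous of bidegree $(k,i)$ such that $D=\sum_id_i$ satisfies $D^2=w$; $(C,d_0)$ is its vertical factorization. A chain map $F:(C,D)\to(C',D')$ is $F=\sum_{i\ge0}f_i$, $f_i$ $R$-linear of bidegree $(0,i)$, with $FD=D'F$; an isomorphism of multifactorizations is an invertible chain map. For an integer $m$, an $m$-homotopy between chain maps $F,G$ is $H=\sum_{i\ge-m}h_i$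 with $h_i$ of bidegree $(-k,i)$ and $F-G=HD+D'H$ (for matrix factorizations of the vertical kind, only the $d_0$ differentials enter). *)

(* Defs.v *)
From HB Require Import structures.
From mathcomp Require Import all_boot all_order all_algebra.
Set Implicit Arguments. Unset Strict Implicit. Unset Printing Implicit Defensive.
Import Order.TTheory GRing.Theory Num.Theory.
Local Open Scope ring_scope.

(* A bigrading of an abelian group V: G a b x  <=>  x is homogeneous of
   bidegree (a,b) (a = internal grading, b = filtration grading).
   V is the internal direct sum of the G a b. *)
Definition graded_by (V : zmodType) (G : int -> int -> V -> bool) : Prop :=
  [/\ (forall a b, G a b 0),
      (forall a b x y, G a b x -> G a b y -> G a b (x - y)),
      (forall x : V, exists s : seq ((int * int) * V),
          [/\ uniq (map fst s), (forall p, p \in s -> G p.1.1 p.1.2 p.2)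
            & x = \sum_(p <- s) p.2])
    & (forall s : seq ((int * int) * V),
          uniq (map fst s) -> (forall p, p \in s -> G p.1.1 p.1.2 p.2) ->
          \sum_(p <- s) p.2 = 0 -> forall p, p \in s -> p.2 = 0)].

Definition bigraded_ring (R : pzRingType) (RG : int -> int -> R -> bool) : Prop :=
  [/\ graded_by RG, RG 0 0 1
    & forall a b c e (r s : R), RG a b r -> RG c e s -> RG (a + c) (b + e) (r * s)].

Definition bigraded_module (R : pzRingType) (RG : int -> int -> R -> bool)
  (C : lmodType R) (CG : int -> int -> C -> bool) : Prop :=
  graded_by CG /\
  forall a b c e (r : R) (x : C), RG a b r -> CG c e x -> CG (a + c) (b + e) (r *: x).

(* grading of M{i,j}: an element of bidegree (a,b) in M has bidegree
   (a+i,b+j) in M{i,j} *)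
Definition shiftG (R : pzRingType) (C : lmodType R) (CG : int -> int -> C -> bool)
  (i j : int) : int -> int -> C -> bool := fun a b => CG (a - i) (b - j).

(* Koszul sign rule: a shift by an odd internal amount negates the differential *)
Definition shift_fam (R : pzRingType) (C : lmodType R) (i : int)
  (d : nat -> C -> C) : nat -> C -> C :=
  fun n x => if odd `|i|%N then - d n x else d n x.

Definition fin_support (R : pzRingType) (C : lmodType R)
  (CG : int -> int -> C -> bool) : Prop :=
  exists lo hi : int, forall a b (x : C), CG a b x -> x != 0 -> lo <= b <= hi.

Definition hmap (R : pzRingType) (C : lmodType R) (G G' : int -> int -> C -> bool)
  (p q : int) (f : C -> C) : Prop :=
  (forall (r : R) (x y : C), f (r *: x + y) = r *: f x + f y) /\
  (forall a b x, G a b x -> G' (a + p) (b + q) (f x)).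

Definition fin_fam (R : pzRingType) (C : lmodType R) (f : nat -> C -> C) (N : nat) : Prop :=
  forall i x, (N <= i)%N -> f i x = 0.

Definition fsum (R : pzRingType) (C : lmodType R) (f : nat -> C -> C) (N : nat) (x : C) : C :=
  \sum_(i < N) f i x.

Definition multifact (R : pzRingType) (C : lmodType R) (CG : int -> int -> C -> bool)
  (k : int) (w : R) (d : nat -> C -> C) : Prop :=
  (forall i : nat, hmap CG CG k i (d i)) /\
  exists N, fin_fam d N /\ forall x, fsum d N (fsum d N x) = w *: x.

(* a matrix factorization d0, viewed as a multifactorization with d_i = 0, i > 0 *)
Definition mf_fam (R : pzRingType) (C : lmodType R) (d0 : C -> C) : nat -> C -> C :=
  fun i => if i == 0%N then d0 else (fun _ => 0).

Definition single (R : pzRingType) (C : lmodType R) (n : nat) (g : C -> C) : nat -> C -> C :=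
  fun i => if i == n then g else (fun _ => 0).

Definition chain_map (R : pzRingType) (C : lmodType R) (G G' : int -> int -> C -> bool)
  (d d' f : nat -> C -> C) : Prop :=
  (forall i : nat, hmap G G' 0 i (f i)) /\
  exists N, [/\ fin_fam f N, fin_fam d N, fin_fam d' N &
    forall x, fsum f N (fsum d N x) = fsum d' N (fsum f N x)].

Definition mfact_iso (R : pzRingType) (C : lmodType R) (G G' : int -> int -> C -> bool)
  (d d' : nat -> C -> C) : Prop :=
  exists f g : nat -> C -> C,
    [/\ chain_map G G' d d' f, chain_map G' G d' d g &
      exists N, [/\ fin_fam f N, fin_fam g N &
        forall x, fsum g N (fsum f N x) = x /\ fsum f N (fsum g N x) = x]].

(* m-homotopy with m = 0: H = \sum_{i >= 0} h_i, h_i of bidegree (-k,i),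
   F - G = H D + D' H *)
Definition homotopic0 (R : pzRingType) (C : lmodType R) (G G' : int -> int -> C -> bool)
  (k : int) (d d' f g : nat -> C -> C) : Prop :=
  exists h : nat -> C -> C,
    (forall i : nat, hmap G G' (- k) i (h i)) /\
    exists N, [/\ fin_fam h N, fin_fam f N, fin_fam g N, fin_fam d N & fin_fam d' N] /\
      forall x, fsum f N x - fsum g N x = fsum h N (fsum d N x) + fsum d' N (fsum h N x).

(* Main.v *)
Require Import Defs.
From HB Require Import structures.
From mathcomp Require Import all_boot all_order all_algebra.
From mathcomp Require Import zify ring.
From Stdlib Require Import FunctionalExtensionality.
Import Order.TTheory GRing.Theory Num.Theory.
Local Open Scope ring_scope.

Set Implicit Arguments. Unset Strict Implicit. Unset Printing Implicit Defensive.


Definition linf (R : pzRingType) (C : lmodType R) (f : C -> C) : Prop :=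
  forall (r : R) (x y : C), f (r *: x + y) = r *: f x + f y.

Lemma linfD (R : pzRingType) (C : lmodType R) (f : C -> C) :
  linf f -> forall x y, f (x + y) = f x + f y.
Proof. by move=> lf x y; have := lf 1 x y; rewrite !scale1r. Qed.

Lemma linf0 (R : pzRingType) (C : lmodType R) (f : C -> C) : linf f -> f 0 = 0.
Proof. move=> lf; have := linfD lf 0 0; rewrite addr0 => /eqP.
by rewrite -subr_eq0 opprD addrA subrr add0r oppr_eq0 => /eqP. Qed.

Lemma linfZ (R : pzRingType) (C : lmodType R) (f : C -> C) :
  linf f -> forall r x, f (r *: x) = r *: f x.
Proof. by move=> lf r x; have := lf r x 0; rewrite !addr0 (linf0 lf) addr0. Qed.

Lemma linfN (R : pzRingType) (C : lmodType R) (f : C -> C) :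
  linf f -> forall x, f (- x) = - f x.
Proof. by move=> lf x; rewrite -scaleN1r linfZ // scaleN1r. Qed.

Lemma linfB (R : pzRingType) (C : lmodType R) (f : C -> C) :
  linf f -> forall x y, f (x - y) = f x - f y.
Proof. by move=> lf x y; rewrite linfD // linfN. Qed.

Lemma linf_sum (R : pzRingType) (C : lmodType R) (f : C -> C) (I : Type)
  (s : seq I) (P : pred I) (F : I -> C) :
  linf f -> f (\sum_(i <- s | P i) F i) = \sum_(i <- s | P i) f (F i).
Proof. move=> lf; apply: (big_morph f (linfD lf) (linf0 lf)). Qed.

Lemma linf_comp (R : pzRingType) (C : lmodType R) (f g : C -> C) :
  linf f -> linf g -> linf (fun x => f (g x)).
Proof. by move=> lf lg r x y; rewrite lg lf. Qed.

Lemma linf_id (R : pzRingType) (C : lmodType R) : linf (fun x : C => x).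
Proof. by []. Qed.

Lemma linf_zero (R : pzRingType) (C : lmodType R) : linf (fun _ : C => 0).
Proof. by move=> r x y; rewrite scaler0 addr0. Qed.

Lemma linf_opp (R : pzRingType) (C : lmodType R) (f : C -> C) :
  linf f -> linf (fun x => - f x).
Proof. by move=> lf r x y; rewrite lf opprD scalerN. Qed.

Lemma linf_sub (R : pzRingType) (C : lmodType R) (f g : C -> C) :
  linf f -> linf g -> linf (fun x => f x - g x).
Proof. move=> lf lg r x y; rewrite lf lg scalerBr; rewrite addrACA; congr (_ + _).
by rewrite opprD. Qed.

Lemma linf_big (R : pzRingType) (C : lmodType R) (I : Type) (s : seq I) (P : pred I)
  (F : I -> C -> C) :
  (forall i, linf (F i)) -> linf (fun x => \sum_(i <- s | P i) F i x).
Proof. move=> lF r x y; rewrite scaler_sumr -big_split /=.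
by apply: eq_bigr => i _; rewrite lF. Qed.

Lemma linf_iter (R : pzRingType) (C : lmodType R) (f : C -> C) m :
  linf f -> linf (iter m f).
Proof. move=> lf; elim: m => [|m IH] r x y //=; by rewrite IH lf. Qed.

Lemma sum_pick (V : zmodType) (K c : nat) (F : nat -> V) :
  (c < K)%N -> \sum_(j < K) (if (j : nat) == c then F j else 0) = F c.
Proof. by move=> cK; rewrite -big_mkcond /= big_ord1_eq cK. Qed.



Lemma gr0 (V : zmodType) (G : int -> int -> V -> bool) : graded_by G -> forall a b, G a b 0.
Proof. by case. Qed.
Lemma grB (V : zmodType) (G : int -> int -> V -> bool) : graded_by G ->
  forall a b x y, G a b x -> G a b y -> G a b (x - y).
Proof. by case. Qed.
Lemma grN (V : zmodType) (G : int -> int -> V -> bool) : graded_by G ->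
  forall a b x, G a b x -> G a b (- x).
Proof. by move=> gG a b x Hx; rewrite -sub0r; apply: grB => //; apply: gr0. Qed.
Lemma grD (V : zmodType) (G : int -> int -> V -> bool) : graded_by G ->
  forall a b x y, G a b x -> G a b y -> G a b (x + y).
Proof. by move=> gG a b x y Hx Hy; rewrite -[y]opprK; apply: grB => //; apply: grN. Qed.
Lemma gr_sum (V : zmodType) (G : int -> int -> V -> bool) (I : Type) (s : seq I)
  (P : pred I) (F : I -> V) a b : graded_by G ->
  (forall i, P i -> G a b (F i)) -> G a b (\sum_(i <- s | P i) F i).
Proof. move=> gG HF; apply: (big_ind (G a b)) => //; first exact: gr0.
by move=> x y; apply: grD. Qed.
Lemma gr_eq (V : zmodType) (G : int -> int -> V -> bool) a b a' b' x :
  a = a' -> b = b' -> G a b x -> G a' b' x.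
Proof. by move=> -> ->. Qed.

Lemma gr_ext (R : pzRingType) (C : lmodType R) (G : int -> int -> C -> bool) (T : C -> C) :
  graded_by G -> linf T -> (forall a b y, G a b y -> T y = 0) -> forall x, T x = 0.
Proof. case=> _ _ dec _ lT HT x. have [s [_ Hs ->]] := dec x.
rewrite (linf_sum _ _ _ lT) big_seq; apply: big1 => p ps; apply: (HT p.1.1 p.1.2); exact: Hs. Qed.

Lemma gr_extract (R : pzRingType) (C : lmodType R) (G : int -> int -> C -> bool)
  (N : nat) (u : nat -> C) (a b : int) : graded_by G ->
  (forall i, (i < N)%N -> G a (b + i%:Z) (u i)) -> \sum_(i < N) u i = 0 ->
  forall i, (i < N)%N -> u i = 0.
Proof. case=> _ _ _ uq Hu Hs i iN.
pose s := map (fun j : 'I_N => ((a, b + (j : nat)%:Z), u j)) (index_enum 'I_N).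
have U1 : uniq [seq p.1 | p <- s].
  rewrite -map_comp map_inj_uniq ?index_enum_uniq //.
  move=> j1 j2 /= [] /addrI [] /val_inj //.
have U2 : forall p, p \in s -> G p.1.1 p.1.2 p.2.
  move=> p /mapP [j _ ->] /=; exact: Hu.
have U3 : \sum_(p <- s) p.2 = 0 by rewrite big_map.
have Hin : ((a, b + i%:Z), u i) \in s.
  by apply/mapP; exists (Ordinal iN) => //; rewrite mem_index_enum.
exact: (uq s U1 U2 U3 _ Hin).
Qed.



Lemma fin_fam_le (R : pzRingType) (C : lmodType R) (f : nat -> C -> C) A B :
  fin_fam f A -> (A <= B)%N -> fin_fam f B.
Proof. by move=> fA AB i x iB; apply: fA; apply: leq_trans iB. Qed.

Lemma fsum_ext (R : pzRingType) (C : lmodType R) (f : nat -> C -> C) A N x :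
  fin_fam f A -> (A <= N)%N -> fsum f N x = fsum f A x.
Proof. move=> fA AN; rewrite /fsum (big_ord_widen N (fun i => f i x) AN).
rewrite [RHS]big_mkcond /=; apply: eq_bigr => i _.
by case: ifP => // /negbT; rewrite -leqNgt => /fA ->. Qed.

Lemma fsum_one (R : pzRingType) (C : lmodType R) (f : nat -> C -> C) c N x :
  (forall i y, i != c -> f i y = 0) -> fin_fam f N -> fsum f N x = f c x.
Proof. move=> Hf fN; rewrite /fsum.
have [cN|Nc] := ltnP c N.
  rewrite (bigD1 (Ordinal cN)) //= big1 ?addr0 // => i /negbTE ne.
  apply: Hf; apply/negP => /eqP ic; move: ne; rewrite -val_eqE /= ic eqxx //.
by rewrite fN // big1 // => i _; apply: Hf; rewrite neq_ltn (leq_trans (ltn_ord i)). Qed.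

Definition conv (R : pzRingType) (C : lmodType R) (f g : nat -> C -> C) : nat -> C -> C :=
  fun i x => \sum_(j < i.+1) f j (g (i - j)%N x).

Lemma conv_pair (R : pzRingType) (C : lmodType R) (f g : nat -> C -> C) i K x :
  (i < K)%N -> conv f g i x =
  \sum_(j < K) \sum_(l < K) (if (j + l == i)%N then f j (g l x) else 0).
Proof. move=> iK; rewrite /conv (big_ord_widen K (fun j => f j (g (i - j)%N x)) iK).
rewrite big_mkcond /=; apply: eq_bigr => j _.
have -> : \sum_(l < K) (if (j + l == i)%N then f j (g l x) else 0) =
          \sum_(l < K) (if (l : nat) == (i - j)%N then
                 (if (j <= i)%N then f j (g l x) else 0) else 0).
  apply: eq_bigr => l _; case: (ltnP i j) => ij.
  - have -> : (j + l == i)%N = false by apply/negbTE; lia.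
    by case: ifP.
  - have -> : (j + l == i)%N = ((l : nat) == (i - j)%N) by apply/idP/idP; lia.
    by [].
rewrite (sum_pick (fun l => if (j <= i)%N then f j (g l x) else 0)); last by rewrite (leq_ltn_trans (leq_subr _ _)).
by rewrite ltnS.
Qed.

Lemma sum_pick' (V : zmodType) (K c : nat) (F : nat -> V) :
  \sum_(j < K) (if (j : nat) == c then F j else 0) = if (c < K)%N then F c else 0.
Proof. by rewrite -big_mkcond /= big_ord1_eq. Qed.

Lemma fsum_conv (R : pzRingType) (C : lmodType R) (f g : nat -> C -> C) A K x :
  (forall j, linf (f j)) -> fin_fam f A -> fin_fam g A -> (A + A <= K)%N ->
  fsum (conv f g) K x = fsum f A (fsum g A x).
Proof. move=> lf fA gA AK.
have AK' : (A <= K)%N by apply: leq_trans AK; apply: leq_addr.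
rewrite -(fsum_ext _ fA AK') -(fsum_ext _ gA AK') /fsum.
have -> : \sum_(i < K) conv f g i x =
   \sum_(i < K) \sum_(j < K) \sum_(l < K) (if (j + l == i)%N then f j (g l x) else 0).
  by apply: eq_bigr => i _; rewrite (conv_pair _ _ _ (ltn_ord i)).
rewrite exchange_big /=; apply: eq_bigr => j _.
rewrite exchange_big /= (linf_sum _ _ _ (lf j)); apply: eq_bigr => l _.
have -> : \sum_(i < K) (if (j + l == i)%N then f j (g l x) else 0) =
          \sum_(i < K) (if (i : nat) == (j + l)%N then f j (g l x) else 0).
  by apply: eq_bigr => i _; rewrite eq_sym.
rewrite (@sum_pick' _ K (j + l)%N (fun _ => f j (g l x))); case: ltnP => // jlK.
have [jA|Aj] := ltnP j A.
  by rewrite gA ?(linf0 (lf j)) //; lia.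
by rewrite fA.
Qed.

Lemma conv_fin (R : pzRingType) (C : lmodType R) (f g : nat -> C -> C) A B :
  (forall j, linf (f j)) -> fin_fam f A -> fin_fam g B -> fin_fam (conv f g) (A + B).
Proof. move=> lf fA gB i x iAB; rewrite /conv big1 // => j _.
have [jA|Aj] := ltnP j A; last by rewrite fA.
have jle := ltn_ord j.
by rewrite gB ?(linf0 (lf j)) //; lia. Qed.

Lemma conv_lin (R : pzRingType) (C : lmodType R) (f g : nat -> C -> C) i :
  (forall j, linf (f j)) -> (forall j, linf (g j)) -> linf (conv f g i).
Proof. move=> lf lg; rewrite /conv.
apply: (@linf_big _ _ _ _ _ (fun (j : 'I_i.+1) x => f j (g (i - j)%N x))).
by move=> j; apply: linf_comp. Qed.

Lemma conv_hmap (R : pzRingType) (C : lmodType R) (G : int -> int -> C -> bool)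
  (f g : nat -> C -> C) (p q : int) (i : nat) : graded_by G ->
  (forall j : nat, hmap G G p j (f j)) -> (forall j : nat, hmap G G q j (g j)) ->
  hmap G G (p + q) i (conv f g i).
Proof. move=> gG hf hg; split.
  by apply: conv_lin => j; [case: (hf j)|case: (hg j)].
move=> a b x Hx; rewrite /conv; apply: gr_sum => // j _.
have jle := ltn_ord j.
have H1 := (hg (i - j)%N).2 a b x Hx.
have H2 := (hf j).2 _ _ _ H1.
apply: gr_eq H2; first by ring.
rewrite -addrA; congr (_ + _); lia.
Qed.



Definition gfam (R : pzRingType) (C : lmodType R) (n M : nat) (phi : C -> C) : nat -> C -> C :=
  fun p x => \sum_(m < M) (if p == (m * n)%N then iter m phi x else 0).
Definition ffam (R : pzRingType) (C : lmodType R) (n : nat) (phi : C -> C) : nat -> C -> C :=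
  fun l x => if l == 0%N then x else if l == n then - phi x else 0.

Lemma gfam_small (R : pzRingType) (C : lmodType R) (n M : nat) (phi : C -> C) p y :
  (0 < n)%N -> (2 <= M)%N -> (p <= n)%N ->
  gfam n M phi p y = (if p == 0%N then y else 0) + (if p == n then phi y else 0).
Proof. move=> n0 M2 pn; rewrite /gfam.
have -> : \sum_(m < M) (if p == (m * n)%N then iter m phi y else 0) =
  \sum_(m < M) ((if (m : nat) == 0%N then (if p == 0%N then y else 0) else 0) +
                (if (m : nat) == 1%N then (if p == n then phi y else 0) else 0)).
  apply: eq_bigr => [[m mM]] _ /=.
  case: m mM => [|[|m]] mM /=; rewrite ?mul0n ?mul1n ?addr0 ?add0r //.
  have -> : (p == (m.+2 * n)%N) = false by apply/negbTE; lia.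
  by [].
rewrite big_split /= (sum_pick (fun _ => if p == 0%N then y else 0)); last by lia.
by rewrite (sum_pick (fun _ => if p == n then phi y else 0)) //; lia.
Qed.

Lemma ffam_sum (R : pzRingType) (C : lmodType R) (n A : nat) (phi : C -> C) y :
  (0 < n)%N -> (n < A)%N -> fsum (ffam n phi) A y = y - phi y.
Proof. move=> n0 nA; rewrite /fsum /ffam.
have -> : \sum_(l < A) (if (l : nat) == 0%N then y else if (l : nat) == n then - phi y else 0) =
  \sum_(l < A) ((if (l : nat) == 0%N then y else 0) + (if (l : nat) == n then - phi y else 0)).
  apply: eq_bigr => [[l lA]] _ /=; case: eqP => [->|_]; last by rewrite add0r.
  have -> : (0%N == n) = false by apply/negbTE; lia.
  by rewrite addr0.
rewrite big_split /= (sum_pick (fun _ => y)); last by lia.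
by rewrite (sum_pick (fun _ => - phi y)).
Qed.

Lemma gfam_sum (R : pzRingType) (C : lmodType R) (n M A : nat) (phi : C -> C) y :
  (0 < n)%N -> (M * n <= A)%N -> fsum (gfam n M phi) A y = \sum_(m < M) iter m phi y.
Proof. move=> n0 MA; rewrite /fsum /gfam exchange_big /=; apply: eq_bigr => [[m mM]] _ /=.
rewrite (@sum_pick' _ A (m * n)%N (fun _ => iter m phi y)).
by have -> : (m * n < A)%N by nia. Qed.

Lemma gfam_fin (R : pzRingType) (C : lmodType R) (n M A : nat) (phi : C -> C) :
  (0 < n)%N -> (M * n <= A)%N -> fin_fam (gfam n M phi) A.
Proof. move=> n0 MA i x iA; rewrite /gfam big1 // => [[m mM]] _ /=.
by have -> : (i == m * n)%N = false by apply/negbTE; nia. Qed.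

Lemma ffam_fin (R : pzRingType) (C : lmodType R) (n A : nat) (phi : C -> C) :
  (n < A)%N -> fin_fam (ffam n phi) A.
Proof. move=> nA i x iA; rewrite /ffam.
have -> : (i == 0)%N = false by apply/negbTE; lia.
by have -> : (i == n)%N = false by apply/negbTE; lia. Qed.

Lemma telesc (V : zmodType) (a : nat -> V) M :
  \sum_(m < M) (a m - a m.+1) = a 0%N - a M.
Proof. elim: M => [|M IH]; first by rewrite big_ord0 subrr.
by rewrite big_ord_recr /= IH addrA subrK. Qed.

Lemma GF_inv (R : pzRingType) (C : lmodType R) (M : nat) (phi : C -> C) y :
  linf phi -> (forall z, iter M phi z = 0) ->
  \sum_(m < M) iter m phi (y - phi y) = y /\
  (\sum_(m < M) iter m phi y) - phi (\sum_(m < M) iter m phi y) = y.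
Proof. move=> lp nil; split.
  have -> : \sum_(m < M) iter m phi (y - phi y) = \sum_(m < M) (iter m phi y - iter m.+1 phi y).
    by apply: eq_bigr => m _; rewrite (linfB (linf_iter _ lp)) iterSr.
  by rewrite (telesc (fun m => iter m phi y)) nil subr0.
rewrite (linf_sum _ _ _ lp) -sumrB.
have -> : \sum_(m < M) (iter m phi y - phi (iter m phi y)) = \sum_(m < M) (iter m phi y - iter m.+1 phi y).
  by [].
by rewrite (telesc (fun m => iter m phi y)) nil subr0.
Qed.

Lemma iter_deg (R : pzRingType) (C : lmodType R) (G : int -> int -> C -> bool) (n : nat)
  (phi : C -> C) : (forall a b x, G a b x -> G a (b + n%:Z) (phi x)) ->
  forall m a b x, G a b x -> G a (b + (m * n)%N%:Z) (iter m phi x).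
Proof. move=> Hp; elim=> [|m IH] a b x Hx /=; first by rewrite mul0n addr0.
have := Hp _ _ _ (IH a b x Hx); apply: gr_eq => //; rewrite -addrA; congr (_ + _); lia. Qed.

Lemma gfam_hmap (R : pzRingType) (C : lmodType R) (G : int -> int -> C -> bool) (n M : nat)
  (phi : C -> C) : graded_by G -> linf phi ->
  (forall a b x, G a b x -> G a (b + n%:Z) (phi x)) ->
  forall j : nat, hmap G G 0 j (gfam n M phi j).
Proof. move=> gG lp Hp j; split.
  apply: (@linf_big _ _ _ _ _ (fun (m : 'I_M) x => if j == (m * n)%N then iter m phi x else 0)).
  move=> m; case: (j == (m * n)%N); [exact: linf_iter|exact: linf_zero].
move=> a b x Hx; apply: gr_sum => // m _; case: eqP => [->|_]; last exact: gr0.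
by have := iter_deg Hp m Hx; apply: gr_eq => //; rewrite addr0.
Qed.

Lemma ffam_hmap (R : pzRingType) (C : lmodType R) (G : int -> int -> C -> bool) (n : nat)
  (phi : C -> C) : graded_by G -> linf phi ->
  (forall a b x, G a b x -> G a (b + n%:Z) (phi x)) ->
  forall j : nat, hmap G G 0 j (ffam n phi j).
Proof. move=> gG lp Hp j; rewrite /ffam; split.
  case: (j == 0%N); first exact: linf_id.
  case: (j == n); [exact: linf_opp|exact: linf_zero].
move=> a b x Hx; case: eqP => [->|_]; first by rewrite !addr0.
case: eqP => [->|_]; last exact: gr0.
by apply: grN => //; rewrite addr0; apply: Hp.
Qed.



Lemma cg_small (R : pzRingType) (C : lmodType R) (n M : nat) (phi : C -> C)
  (d' : nat -> C -> C) j y :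
  (0 < n)%N -> (2 <= M)%N -> (j <= n)%N ->
  conv (gfam n M phi) d' j y = d' j y + (if j == n then phi (d' 0%N y) else 0).
Proof. move=> n0 M2 jn; rewrite /conv.
rewrite (eq_bigr (fun p : 'I_j.+1 => (if (p : nat) == 0%N then d' (j - p)%N y else 0) +
                    (if (p : nat) == n then phi (d' (j - p)%N y) else 0))); last first.
  move=> [p pj] _ /=; rewrite gfam_small //; lia.
rewrite big_split /= (sum_pick (fun p => d' (j - p)%N y)) // subn0.
rewrite (@sum_pick' _ j.+1 n (fun p => phi (d' (j - p)%N y))).
case: eqP => [->|jn']; first by rewrite ltnSn subnn.
by have -> : (n < j.+1)%N = false by apply/negbTE; lia.
Qed.

Lemma dpp_small (R : pzRingType) (C : lmodType R) (n M : nat) (phi : C -> C)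
  (d' : nat -> C -> C) i x :
  (0 < n)%N -> (2 <= M)%N -> linf phi -> (forall j, linf (d' j)) -> (i <= n)%N ->
  conv (conv (gfam n M phi) d') (ffam n phi) i x =
  d' i x + (if i == n then phi (d' 0%N x) - d' 0%N (phi x) else 0).
Proof. move=> n0 M2 lp ld in_.
have lg : forall j, linf (gfam n M phi j).
  move=> j; apply: (@linf_big _ _ _ _ _ (fun (m : 'I_M) x => if j == (m * n)%N then iter m phi x else 0)).
  move=> m; case: (j == (m * n)%N); [exact: linf_iter|exact: linf_zero].
have lcg : forall j, linf (conv (gfam n M phi) d' j) by move=> j; apply: conv_lin.
set cg := conv (gfam n M phi) d'.
rewrite {1}/conv.
rewrite (eq_bigr (fun j : 'I_i.+1 => (if (j : nat) == i then cg i x else 0) +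
           (if (j : nat) == 0%N then (if i == n then cg 0%N (- phi x) else 0) else 0))); last first.
  move=> [j ji] _ /=; rewrite /ffam.
  case: (eqVneq j i) => [->|nji].
    rewrite subnn eqxx.
    case: (eqVneq i 0%N) => [->|_]; last by rewrite addr0.
    have -> : (0%N == n) = false by apply/negbTE; lia.
    by rewrite ?eqxx addr0.
  have -> : ((i - j)%N == 0%N) = false by apply/negbTE; lia.
  rewrite add0r.
  case: (eqVneq j 0%N) => [->|nj0].
    rewrite subn0; case: (eqVneq i n) => // _.
    exact: (linf0 (lcg 0%N)).
  have -> : ((i - j)%N == n) = false by apply/negbTE; lia.
  exact: (linf0 (lcg j)).
rewrite big_split /= (sum_pick (fun _ => cg i x)) //.
rewrite (sum_pick (fun _ => if i == n then cg 0%N (- phi x) else 0)) //.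
rewrite /cg !cg_small //.
have -> : (0%N == n) = false by apply/negbTE; lia.
rewrite addr0; case: (eqVneq i n) => _; last by rewrite !addr0.
by rewrite (linfN (ld 0%N)) addrA.
Qed.



Lemma mf_sq (R : pzRingType) (RG : int -> int -> R -> bool)
  (C : lmodType R) (CG : int -> int -> C -> bool) (k : int) (w : R) (d : nat -> C -> C) :
  bigraded_module RG CG -> RG (k *+ 2) 0 w -> multifact CG k w d ->
  forall m, (0 < m)%N -> forall x, conv d d m x = 0.
Proof. move=> [gG HM] Hw [hd [N [fd Dd]]] m m0.
have ld : forall j, linf (d j) by move=> j; case: (hd j).
apply: (@gr_ext _ _ CG (conv d d m) gG (conv_lin m ld ld)).
move=> a b y Hy.
set K := (N + N + m.+1)%N.
pose u i := conv d d i y - (if i == 0%N then w *: y else 0).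
have Hsum : \sum_(i < K) u i = 0.
  rewrite sumrB (sum_pick (fun _ => w *: y)) /K; last by lia.
  change (fsum (conv d d) K y - w *: y = 0).
  by rewrite (fsum_conv y ld fd fd (leq_addr _ _)) Dd subrr.
have Hgr : forall i, (i < K)%N -> CG (a + (k + k)) (b + i%:Z) (u i).
  move=> i _; apply: grB => //.
    by have := (conv_hmap i gG hd hd).2 _ _ _ Hy.
  case: eqP => [->|_]; last exact: gr0.
  have := HM _ _ _ _ _ _ Hw Hy; apply: gr_eq; first by rewrite mulr2n addrC.
  by rewrite add0r addr0.
have mK : (m < K)%N by rewrite /K; lia.
have := gr_extract gG Hgr Hsum mK.
rewrite /u; have -> : (m == 0%N) = false by apply/negbTE; lia.
by rewrite subr0.
Qed.

Lemma anti (R : pzRingType) (RG : int -> int -> R -> bool)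
  (C : lmodType R) (CG : int -> int -> C -> bool) (k : int) (w : R) (d d' : nat -> C -> C) n :
  bigraded_module RG CG -> RG (k *+ 2) 0 w -> multifact CG k w d -> multifact CG k w d' ->
  (1 <= n)%N -> (forall i, (i < n)%N -> d i = d' i) ->
  forall x, d 0%N (d n x - d' n x) + (d n (d 0%N x) - d' n (d 0%N x)) = 0.
Proof. move=> HM Hw Hd Hd' n1 Heq x.
have ld : forall j, linf (d j) by move=> j; case: Hd => /(_ j) [].
have e := mf_sq HM Hw Hd n1 x; have e' := mf_sq HM Hw Hd' n1 x.
have : conv d d n x - conv d' d' n x = 0 by rewrite e e' subrr.
rewrite /conv -sumrB.
rewrite (eq_bigr (fun j : 'I_n.+1 => (if (j : nat) == 0%N then d 0%N (d n x - d' n x) else 0) +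
     (if (j : nat) == n then d n (d 0%N x) - d' n (d 0%N x) else 0))); last first.
  move=> [j jn] _ /=.
  case: (eqVneq j 0%N) => [->|j0].
    have -> : (0%N == n) = false by apply/negbTE; lia.
    by rewrite subn0 addr0 -(Heq 0%N n1) (linfB (ld 0%N)).
  rewrite add0r; case: (eqVneq j n) => [->|jn'].
    by rewrite subnn -(Heq 0%N n1).
  rewrite -(Heq j) -?(Heq (n - j)%N) ?subrr //; lia.
rewrite big_split /= (sum_pick (fun _ => d 0%N (d n x - d' n x))) //.
by rewrite (sum_pick (fun _ => d n (d 0%N x) - d' n (d 0%N x))).
Qed.


Unset Implicit Arguments. Set Strict Implicit.


Theorem lemma2p3 (R : pzRingType) (RG : int -> int -> R -> bool)
  (C : lmodType R) (CG : int -> int -> C -> bool)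
  (k : int) (w : R) (d d' : nat -> C -> C) (n : nat) :
  bigraded_ring RG -> bigraded_module RG CG ->
  odd `|k|%N -> RG (k *+ 2) 0 w ->
  fin_support CG ->
  multifact CG k w d -> multifact CG k w d' ->
  (1 <= n)%N -> (forall i, (i < n)%N -> d i = d' i) ->
  chain_map CG (shiftG CG (- k) 0) (mf_fam (d 0%N)) (shift_fam (- k) (mf_fam (d 0%N)))
    (single n (fun x => d n x - d' n x)) /\
  (homotopic0 CG (shiftG CG (- k) 0) k (mf_fam (d 0%N)) (shift_fam (- k) (mf_fam (d 0%N)))
     (single n (fun x => d n x - d' n x)) (fun _ _ => 0) ->
   exists d'' : nat -> C -> C,
     [/\ multifact CG k w d'', mfact_iso CG CG d'' d' &
         forall i, (i < n.+1)%N -> d'' i = d i]).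
Proof.
move=> HR HM kodd Hw Hfs Hd Hd' n1 Heq.
have gG : graded_by CG by case: HM.
have [hd _] := Hd; have [hd' [Nd' [fd' Dd']]] := Hd'.
have ld : forall j, linf (d j) by move=> j; case: (hd j).
have ld' : forall j, linf (d' j) by move=> j; case: (hd' j).
have lde : linf (fun x => d n x - d' n x) by apply: linf_sub.
have an := anti HM Hw Hd Hd' n1 Heq.
have Hsh : forall (N : nat) y, fin_fam (shift_fam (- k) (mf_fam (d 0%N))) N ->
    fsum (shift_fam (- k) (mf_fam (d 0%N))) N y = - d 0%N y.
  move=> N y fN; rewrite (fsum_one (c := 0%N)) //.
    by rewrite /shift_fam /mf_fam abszN kodd eqxx.
  move=> i z i0; rewrite /shift_fam /mf_fam (negbTE i0).
  by case: (odd _); rewrite ?oppr0.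
have Hmf : forall (N : nat) y, fin_fam (mf_fam (d 0%N)) N ->
    fsum (mf_fam (d 0%N)) N y = d 0%N y.
  move=> N y fN; rewrite (fsum_one (c := 0%N)) //.
  by move=> i z i0; rewrite /mf_fam (negbTE i0).
have Hsg : forall (N : nat) y, fin_fam (single n (fun x => d n x - d' n x)) N ->
    fsum (single n (fun x => d n x - d' n x)) N y = d n y - d' n y.
  move=> N y fN; rewrite (fsum_one (c := n)) //; first by rewrite /single eqxx.
  by move=> i z i0; rewrite /single (negbTE i0).
split.
  split.
    move=> i; rewrite /single; case: eqP => [->|_]; split => //.
    - move=> a b x Hx; rewrite /shiftG.
      have H1 := (hd n).2 _ _ _ Hx; have H2 := (hd' n).2 _ _ _ Hx.
      have := grB gG H1 H2; apply: gr_eq; [by rewrite addr0 opprK | by rewrite subr0].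
    - exact: linf_zero.
    - by move=> a b x _; rewrite /shiftG; apply: gr0.
  have fs1 : fin_fam (single n (fun x => d n x - d' n x)) n.+1.
    move=> i x ni; rewrite /single.
    by have -> : (i == n) = false by apply/negbTE; lia.
  have fm1 : fin_fam (mf_fam (d 0%N)) n.+1.
    move=> i x ni; rewrite /mf_fam.
    by have -> : (i == 0%N) = false by apply/negbTE; lia.
  have fsh1 : fin_fam (shift_fam (- k) (mf_fam (d 0%N))) n.+1.
    move=> i x ni; rewrite /shift_fam /mf_fam.
    have -> : (i == 0%N) = false by apply/negbTE; lia.
    by case: (odd _); rewrite ?oppr0.
  exists n.+1; split => // x.
  rewrite (Hmf _ _ fm1) (Hsg _ _ fs1) (Hsh _ _ fsh1).
  apply/eqP; rewrite -addr_eq0 addrC; apply/eqP; rewrite (Hsg _ _ fs1); exact: an.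
move=> [h [Hh [N [[fh fsg _ fmf fsh] HE]]]].
set phi := h n.
have lp : linf phi by case: (Hh n).
have lh : forall j, linf (h j) by move=> j; case: (Hh j).
have Hhd : forall j a b x, CG a b x -> CG a (b + j%:Z) (h j x).
  move=> j a b x Hx; have := (Hh j).2 _ _ _ Hx; rewrite /shiftG.
  by apply: gr_eq; [rewrite opprK addrNK | rewrite subr0].
have Hp : forall a b x, CG a b x -> CG a (b + n%:Z) (phi x) by move=> a b x; apply: Hhd.
have key : forall x, (d n x - d' n x) - (phi (d 0%N x) - d 0%N (phi x)) = 0.
  apply: (@gr_ext _ _ CG (fun x => (d n x - d' n x) - (phi (d 0%N x) - d 0%N (phi x))) gG).
    apply: linf_sub => //; apply: linf_sub; apply: linf_comp => //.
  move=> a b y Hy.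
  have E := HE y.
  rewrite (Hsg _ _ fsg) (Hmf _ _ fmf) (Hsh _ _ fsh) in E.
  have E0 : fsum (fun=> (fun=> 0)) N y = (0 : C) by rewrite /fsum big1.
  rewrite E0 subr0 in E.
  set K := (N + n.+1)%N.
  have NK : (N <= K)%N by rewrite /K leq_addr.
  rewrite -(fsum_ext _ fh NK) -(fsum_ext _ fh NK) in E.
  pose u i := h i (d 0%N y) - d 0%N (h i y) - (if i == n then d n y - d' n y else 0).
  have Hsum : \sum_(i < K) u i = 0.
    rewrite sumrB (sum_pick (fun _ => d n y - d' n y)); last by rewrite /K; lia.
    rewrite sumrB -(linf_sum _ _ _ (ld 0%N)).
    change (fsum h K (d 0%N y) - d 0%N (fsum h K y) - (d n y - d' n y) = 0).
    by rewrite E subrr.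
  have Hgr : forall i, (i < K)%N -> CG (a + k) (b + i%:Z) (u i).
    move=> i _; apply: grB => //; first apply: grB => //.
    - have := Hhd i _ _ _ ((hd 0%N).2 _ _ _ Hy); apply: gr_eq => //; by rewrite addr0.
    - have := (hd 0%N).2 _ _ _ (Hhd i _ _ _ Hy); apply: gr_eq => //; by rewrite addr0.
    - case: eqP => [->|_]; last exact: gr0.
      have H1 := (hd n).2 _ _ _ Hy; have H2 := (hd' n).2 _ _ _ Hy; exact: (grB gG H1 H2).
  have nK : (n < K)%N by rewrite /K; lia.
  have := gr_extract gG Hgr Hsum nK.
  rewrite /u eqxx => e; apply/eqP; rewrite -oppr_eq0 opprB; apply/eqP.
  by rewrite -e.
have keyE : forall x, d n x - d' n x = phi (d 0%N x) - d 0%N (phi x).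
  by move=> x; apply/eqP; rewrite -subr_eq0; apply/eqP; apply: key.
have [M [M2 nil]] : exists M, (2 <= M)%N /\ forall z, iter M phi z = 0.
  case: Hfs => lo [hi Hlh].
  exists (`|hi - lo|%N + 2)%N; split; first by rewrite addn2.
  apply: (@gr_ext _ _ CG (iter (`|hi - lo|%N + 2) phi) gG (linf_iter _ lp)).
  move=> a b y Hy.
  have Hi := iter_deg Hp (`|hi - lo|%N + 2) Hy.
  case: (eqVneq y 0) => [->|y0]; first exact: (linf0 (linf_iter _ lp)).
  have /andP [h1 h2] := Hlh _ _ _ Hy y0.
  apply/eqP; apply/negP => /negP nz.
  have /andP [h3 h4] := Hlh _ _ _ Hi nz.
  have hL : hi - lo <= (`|hi - lo|%N)%:Z by rewrite abszE ler_norm.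
  move: h3 h4 hL; move: (`|hi - lo|%N) => L h3 h4 hL; nia.
set gF := gfam n M phi.
set fF := ffam n phi.
set A := (Nd' + M * n + n.+1)%N.
have hg : forall j : nat, hmap CG CG 0 j (gF j) by apply: gfam_hmap.
have hf : forall j : nat, hmap CG CG 0 j (fF j) by apply: ffam_hmap.
have lg : forall j, linf (gF j) by move=> j; case: (hg j).
have lf : forall j, linf (fF j) by move=> j; case: (hf j).
have fgA : fin_fam gF A by apply: gfam_fin => //; rewrite /A; lia.
have ffA : fin_fam fF A by apply: ffam_fin; rewrite /A; lia.
have NA : (Nd' <= A)%N by rewrite /A; lia.
have fdA : fin_fam d' A by apply: fin_fam_le fd' NA.
have lcg : forall j, linf (conv gF d' j) by move=> j; apply: conv_lin.
have fcg : fin_fam (conv gF d') (A + A) by apply: conv_fin.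
set d'' := conv (conv gF d') fF.
set K := (A + A + (A + A))%N.
have AK : (A <= K)%N by rewrite /K; lia.
have fdK : fin_fam d'' K.
  apply: (@fin_fam_le _ _ _ (A + A + A)); first by apply: conv_fin.
  by rewrite /K; lia.
have tot : forall y, fsum d'' K y = fsum gF A (fsum d' A (fsum fF A y)).
  move=> y; rewrite (fsum_conv y lcg fcg (fin_fam_le ffA (leq_addr _ _)) (leqnn _)).
  rewrite (fsum_ext _ ffA (leq_addr _ _)).
  by rewrite (fsum_conv _ lg fgA fdA (leqnn _)).
have GF : forall y, fsum gF A (fsum fF A y) = y.
  move=> y; rewrite ffam_sum // ?gfam_sum //; last (by rewrite /A; lia); last by rewrite /A; lia.
  by case: (GF_inv y lp nil).
have FG : forall y, fsum fF A (fsum gF A y) = y.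
  move=> y; rewrite gfam_sum // ?ffam_sum //; last (by rewrite /A; lia); last by rewrite /A; lia.
  by case: (GF_inv y lp nil).
have lGt : linf (fsum gF A).
  exact: (@linf_big _ _ _ _ _ (fun (i : 'I_A) x => gF i x)).
have DDA : forall y, fsum d' A (fsum d' A y) = w *: y.
  by move=> y; rewrite (fsum_ext _ fd' NA) (fsum_ext _ fd' NA) Dd'.
have eK : forall (f : nat -> C -> C) y, fin_fam f A -> fsum f K y = fsum f A y.
  by move=> f y fA; apply: fsum_ext.
exists d''; split.
- split.
    move=> i; have := conv_hmap i gG (fun j => conv_hmap j gG hg hd') hf.
    by rewrite add0r addr0.
  exists K; split => // x.
  by rewrite (tot x) tot FG DDA (linfZ lGt) GF.
- exists fF, gF; split.
  + split => //; exists K; split => //; try (by apply: fin_fam_le AK).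
    move=> x; rewrite tot (eK fF _ ffA) FG (eK d' _ fdA) (eK fF _ ffA) //.
  + split => //; exists K; split => //; try (by apply: fin_fam_le AK).
    move=> x; rewrite tot (eK gF _ fgA) (eK d' _ fdA) (eK gF _ fgA) FG //.
  + exists K; split; try (by apply: fin_fam_le AK).
    move=> x; rewrite (eK fF _ ffA) (eK gF _ fgA) (eK gF _ fgA) (eK fF _ ffA).
    by split; [apply: GF|apply: FG].
- move=> i ii; apply: functional_extensionality => x.
  have iln : (i <= n)%N by lia.
  rewrite /d'' dpp_small //.
  case: (eqVneq i n) => [->|ni].
    by rewrite -(Heq 0%N n1) -keyE addrC subrK.
  by rewrite addr0 Heq //; lia.
Qed.
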